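(* For all positive integers $k$ and $n$ with $n\ge 2$, the cycle $C_{2n}$ is a strict prime $k$th-power distance graph. Furthermore, the labels in a strict prime $k$th-power distance labeling of $C_{2n}$ may be chosen arbitrarily large: for every integer $M$ there is such a labeling all of whose labels exceed $M$.
   Context: A strict prime $k$th-power distance labeling of a graph $G$ is an injective map $L:V(G)\to\mathbb{Z}$ such that for every edge $uv$ of $G$, $|L(u)-L(v)|=p^k$ for some prime $p$ (the prime may depend on the edge); $G$ is a strict prime $k$th-power distance graph if it has such a labeling. *)

(* Defs.v *)
From mathcomp Require Import all_boot all_order all_algebra.
Set Implicit Arguments. Unset Strict Implicit. Unset Printing Implicit Defensive.
Import Order.TTheory GRing.Theory Num.Theory.

Definition cycle_adj (m : nat) : rel 'I_m :=
  fun i j => (val j == (val i).+1 %% m) || (val i == (val j).+1 %% m).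

Definition strict_prime_kpow_labeling (T : finType) (adj : rel T) (k : nat)
  (L : T -> int) : Prop :=
  injective L /\
  forall u v, adj u v -> exists p : nat, prime p /\ `|L u - L v|%N = (p ^ k)%N.

Definition strict_prime_kpow_graph (T : finType) (adj : rel T) (k : nat) : Prop :=
  exists L : T -> int, strict_prime_kpow_labeling adj k L.

(* Main.v *)
Require Import Defs.
From mathcomp Require Import all_boot all_order all_algebra.
From mathcomp Require Import zify.
Import Order.TTheory GRing.Theory Num.Theory.

Section Aux.
Variables (k n : nat).
Hypothesis hk : (0 < k)%N.
Let a := (2 ^ k)%N.
Let b := (3 ^ k)%N.

Definition fl (i : nat) : nat :=
  if (i < n)%N then (i * 2 ^ k)%N else ((2 * n - 1 - i) * 2 ^ k + 3 ^ k)%N.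

Lemma odd_a : odd (2 ^ k) = false.
Proof. by rewrite oddX /= orbF; case: k hk. Qed.

Lemma a_pos : (0 < 2 ^ k)%N.
Proof. by rewrite expn_gt0. Qed.

Lemma fl_inj i j : (i < 2 * n)%N -> (j < 2 * n)%N -> fl i = fl j -> i = j.
Proof.
move=> hi hj; rewrite /fl.
have mx : forall x y : nat, (x * 2 ^ k)%N <> (y * 2 ^ k + 3 ^ k)%N.
  move=> x y /(congr1 odd); rewrite oddD !oddM odd_a !andbF /= oddX /=.
  by rewrite orbT.
case: ifP => hin; case: ifP => hjn.
- by move/eqP; rewrite eqn_pmul2r ?a_pos // => /eqP.
- by move/mx.
- by move=> e; symmetry in e; move/mx: e.
- move/addIn/eqP; rewrite eqn_pmul2r ?a_pos // => /eqP; lia.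
Qed.

Lemma fl_edge i : (i < 2 * n)%N -> (2 <= n)%N ->
  `|(Posz (fl i)) - (Posz (fl (i.+1 %% (2 * n))))|%N = (2 ^ k)%N \/
  `|(Posz (fl i)) - (Posz (fl (i.+1 %% (2 * n))))|%N = (3 ^ k)%N.
Proof.
move=> hi hn.
have ha := a_pos.
case: (ltnP i.+1 (2 * n)) => h1.
  rewrite modn_small //.
  rewrite /fl.
  case: (ltnP i.+1 n) => h2.
    rewrite (ltn_trans (ltnSn i) h2) ?h2; left.
    rewrite distnEr; last by rewrite leq_mul2r leqnSn orbT.
    by rewrite mulSn addnK.
  case: (ltnP i n) => h3.
    have -> : i = n.-1 by lia.
    have -> : (2 * n - 1 - n.-1.+1 = n.-1)%N by lia.
    right; rewrite distnEr ?leq_addr //.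
    by rewrite addnC addnK.
  have -> : (2 * n - 1 - i = (2 * n - 1 - i.+1).+1)%N by lia.
  left; rewrite distnEl; last by rewrite leq_add2r leq_mul2r leqnSn orbT.
  by rewrite subnDr mulSn addnK.
have -> : i.+1 = (2 * n)%N by lia.
rewrite modnn /fl ifF; last by apply/negbTE; lia.
rewrite (leq_trans _ hn) // mul0n.
have -> : (2 * n - 1 - i = 0)%N by lia.
by right; rewrite mul0n add0n distnEl // subn0.
Qed.

End Aux.

Theorem mainTheorem12 (k n : nat) (hk : (0 < k)%N) (hn : (2 <= n)%N) :
  strict_prime_kpow_graph (@cycle_adj (2 * n)) k /\
  (forall M : int, exists L : 'I_(2 * n) -> int,
      strict_prime_kpow_labeling (@cycle_adj (2 * n)) k L /\
      (forall v, (M < L v)%R)).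
Proof.
have key : forall M : int, exists L : 'I_(2 * n) -> int,
      strict_prime_kpow_labeling (@cycle_adj (2 * n)) k L /\
      (forall v, (M < L v)%R).
  move=> M.
  exists (fun i : 'I_(2 * n) => (M + 1 + (Posz (fl k n i)))%R); split; last first.
    move=> v; rewrite -addrA ltrDl.
    by apply: (@lt_le_trans _ _ 1%R) => //; rewrite lerDl.
  split.
    move=> i j /= /addrI /eqP; rewrite eqz_nat => /eqP /(@fl_inj k n hk _ _ (ltn_ord i) (ltn_ord j)).
    exact: val_inj.
  have ed : forall u v : 'I_(2 * n), val v = (val u).+1 %% (2 * n) ->
     exists p : nat, prime p /\
       `|((M + 1 + (Posz (fl k n u))) - (M + 1 + (Posz (fl k n v))))%R|%N = (p ^ k)%N.
    move=> u v e.
    have -> : ((M + 1 + (Posz (fl k n u))) - (M + 1 + (Posz (fl k n v))) =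
               (Posz (fl k n u)) - (Posz (fl k n v)))%R.
      by rewrite opprD addrACA subrr add0r.
    rewrite e.
    case: (@fl_edge k n hk _ (ltn_ord u) hn) => ->; [by exists 2 | by exists 3].
  move=> u v /orP [/eqP e | /eqP e]; first exact: ed.
  have [p [pp hp]] := ed v u e.
  exists p; split => //; rewrite -hp -abszN opprB.
split => //.
have [L [HL _]] := key 0%R.
by split => //; exists L.
Qed.
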